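(* Let $n\ge1$, $\delta\ge0$ and $\hat r\in\mathbb R^n$ with $\hat r_1\ge\hat r_2\ge\cdots\ge\hat r_n$. For $k\in\{1,\dots,n\}$ let $u^{(k)}\in\Delta_n$ have its first $k$ entries equal to $1/k$ and the rest $0$, and $A_k:=\frac1k\sum_{i=1}^k\hat r_i$. Then the problem $\max_{\pi\in\Delta_n}\{\langle\pi,\hat r\rangle-\delta\|\pi\|_\infty\}$ has an optimizer of the form $u^{(m)}$ for some $m\in\arg\max_{1\le k\le n}\{A_k-\delta/k\}$.
   Context: $\Delta_n$ is the probability simplex in $\mathbb R^n$; $\|\pi\|_\infty=\max_i|\pi_i|$. *)

(* Defs.v *)
From mathcomp Require Import all_boot all_order all_algebra.
Set Implicit Arguments. Unset Strict Implicit. Unset Printing Implicit Defensive.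
Import Order.TTheory GRing.Theory Num.Theory.
Local Open Scope ring_scope.

Definition in_simplex (R : realFieldType) (n : nat) (pi : 'I_n -> R) : Prop :=
  (forall i, 0 <= pi i) /\ \sum_(i < n) pi i = 1.

Definition linf (R : realFieldType) (n : nat) (pi : 'I_n -> R) : R :=
  \big[Num.max/0]_(i < n) `|pi i|.

Definition objective (R : realFieldType) (n : nat) (delta : R) (r pi : 'I_n -> R) : R :=
  \sum_(i < n) pi i * r i - delta * linf pi.

(* u^(k): first k entries 1/k, rest 0 (k is 1-based, entries i < k in 0-based indexing) *)
Definition uvec (R : realFieldType) (n k : nat) : 'I_n -> R :=
  fun i => if (i < k)%N then k%:R^-1 else 0.

Definition Aavg (R : realFieldType) (n : nat) (r : 'I_n -> R) (k : nat) : R :=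
  k%:R^-1 * \sum_(i < n | (i < k)%N) r i.

(* Main.v *)
Require Import Defs.
From mathcomp Require Import all_boot all_order all_algebra.
Import Order.TTheory GRing.Theory Num.Theory.
Local Open Scope ring_scope.

Lemma split_pref (R : realFieldType) (n k : nat) (F : 'I_n -> R) (hk : (k < n)%N) :
  \sum_(i < n | (i < k.+1)%N) F i = F (Ordinal hk) + \sum_(i < n | (i < k)%N) F i.
Proof.
rewrite (bigD1 (Ordinal hk)) //=; congr (_ + _).
apply: eq_bigl => i /=.
case: (ltngtP i k) => h.
- rewrite ltnS (ltnW h) /=; apply/eqP => e; move: h; rewrite e /= ltnn //.
- by rewrite ltnS leqNgt h.
- have -> : i = Ordinal hk by apply: val_inj.
  by rewrite eqxx andbF.
Qed.

Lemma card_pref (R : realFieldType) (n k : nat) : (k <= n)%N ->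
  \sum_(i < n | (i < k)%N) (1 : R) = k%:R.
Proof.
elim: k => [|k IH] hk; first by rewrite big_pred0.
rewrite (@split_pref R n k (fun _ => (1:R)) hk) IH; last exact: ltnW.
by rewrite -natr1 addrC.
Qed.

Lemma argmax_nat (R : realFieldType) (f : nat -> R) (n : nat) : (0 < n)%N ->
  exists m, (1 <= m <= n)%N /\ forall k, (1 <= k <= n)%N -> f k <= f m.
Proof.
elim: n => [//|n IH] _.
case: n IH => [|n] IH.
  exists 1%N; split => // k /andP[h1 h2]; have -> : k = 1%N by apply/eqP; rewrite eqn_leq h1 h2.
  by [].
have [m [/andP[hm1 hm2] hmax]] := IH isT.
case: (lerP (f n.+2) (f m)) => h.
  exists m; split; first by rewrite hm1 /= (leq_trans hm2).
  move=> k /andP[hk1 hk2]; rewrite leq_eqVlt in hk2; case/orP: hk2 => [/eqP->//|hk2].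
  by apply: hmax; rewrite hk1.
exists n.+2; split; [by rewrite ltn0Sn leqnn | move=> k /andP[hk1 hk2]]; rewrite leq_eqVlt in hk2; case/orP: hk2 => [/eqP->//|hk2].
by apply: le_trans (ltW h); apply: hmax; rewrite hk1.
Qed.

Lemma posprefix (R : realFieldType) (n : nat) (w : 'I_n -> R) (delta : R) :
  0 <= delta ->
  (forall i j : 'I_n, (i <= j)%N -> w j <= w i) ->
  (forall k, (k <= n)%N -> \sum_(i < n | (i < k)%N) w i <= delta) ->
  forall k, (k <= n)%N -> \sum_(i < n | (i < k)%N) Num.max (w i) 0 <= delta.
Proof.
move=> hd hs hW; elim => [|k IH] hk; first by rewrite big_pred0.
rewrite split_pref.
case: (lerP (w (Ordinal hk)) 0) => h.
  by rewrite add0r IH // ltnW.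
apply: le_trans (hW k.+1 hk); rewrite split_pref; apply: lerD => //.
apply: ler_sum => i hi; rewrite max_l //; apply: ltW; apply: lt_le_trans h _.
by apply: hs => /=; apply: ltnW.
Qed.

Theorem mainTheorem11 (R : realFieldType) (n : nat) (delta : R) (r : 'I_n -> R) :
  (0 < n)%N -> 0 <= delta ->
  (forall i j : 'I_n, (i <= j)%N -> r j <= r i) ->
  exists m : nat,
    [/\ (1 <= m <= n)%N,
        (forall k : nat, (1 <= k <= n)%N ->
           Aavg r k - delta / k%:R <= Aavg r m - delta / m%:R),
        in_simplex (@uvec R n m) &
        (forall pi : 'I_n -> R, in_simplex pi ->
           objective delta r pi <= objective delta r (@uvec R n m))].
Proof.
move=> hn hd hs.
have [m [/andP[hm1 hm2] hmax]] := @argmax_nat R (fun k => Aavg r k - delta / k%:R) n hn.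
set V := Aavg r m - delta / m%:R.
have mpos : (0 : R) < m%:R by rewrite ltr0n.
have hmne : (m%:R : R) != 0 by rewrite gt_eqF.
have usum : \sum_(i < n) @uvec R n m i = 1.
  rewrite /uvec -big_mkcond /= (eq_bigr (fun _ => m%:R^-1 * 1)); last by move=> *; rewrite mulr1.
  rewrite -mulr_sumr card_pref //.
  by rewrite mulVf.
have usimp : in_simplex (@uvec R n m).
  split => // i; rewrite /uvec; case: ifP => _ //; by rewrite invr_ge0 ltW.
have ulinf : linf (@uvec R n m) = m%:R^-1.
  have mi0 : (0:R) <= m%:R^-1 by rewrite invr_ge0 ltW.
  apply/eqP; rewrite eq_le; apply/andP; split.
    apply: bigmax_le => // i _.
    rewrite /uvec; case: ifP => _; first by rewrite ger0_norm.
    by rewrite normr0.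
  have := (bigmax_leP _ _ _ (fun i : 'I_n => `|@uvec R n m i|) (le_refl (linf (@uvec R n m)))).
  case => _ /(_ (Ordinal hn) isT); rewrite /uvec /= hm1 ger0_norm //.
have uobj : objective delta r (@uvec R n m) = V.
  rewrite /objective ulinf /V /Aavg /uvec.
  rewrite (eq_bigr (fun i : 'I_n => if (i < m)%N then m%:R^-1 * r i else 0)); last first.
    by move=> i _; case: ifP => _; rewrite ?mul0r.
  by rewrite -big_mkcond /= -mulr_sumr mulrC.
exists m; split => //; first by rewrite hm1.
move=> pi [hpi0 hpi1]; rewrite uobj.
set t := linf pi.
have hle : forall i, pi i <= t.
  move=> i; have := (bigmax_leP _ _ _ (fun i : 'I_n => `|pi i|) (le_refl t)).
  by case => _ /(_ i isT); rewrite ger0_norm.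
have ht0 : 0 <= t by apply: le_trans (hle (Ordinal hn)).
set w := fun i => r i - V.
have hW : forall k, (k <= n)%N -> \sum_(i < n | (i < k)%N) w i <= delta.
  case => [|k] hk; first by rewrite big_pred0.
  rewrite /w sumrB [X in _ - X](eq_bigr (fun _ => V * 1)); last by move=> *; rewrite mulr1.
  rewrite -mulr_sumr card_pref // lerBlDr.
  have := hmax k.+1 hk; rewrite -/V /Aavg => h.
  have kpos : (0 : R) < k.+1%:R by rewrite ltr0n.
  rewrite -(ler_pM2l kpos) mulrBr mulrA mulfV ?gt_eqF // mul1r in h.
  rewrite mulrCA mulfV ?gt_eqF // mulr1 in h.
  by rewrite -lerBlDl mulrC.
have hT := @posprefix R n w delta hd (fun i j h => lerB (hs i j h) (le_refl V)) hW n (leqnn n).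
rewrite (eq_bigl predT) in hT; last by move=> i; rewrite /= ltn_ord.
have key : \sum_(i < n) pi i * w i <= t * delta.
  apply: le_trans (ler_wpM2l ht0 hT); rewrite mulr_sumr; apply: ler_sum => i _.
  case: (lerP (w i) 0) => h.
    by rewrite mulr0 mulr_ge0_le0.
  by apply: ler_wpM2r; [exact: ltW | exact: hle].
rewrite /objective -/t lerBlDr; apply: le_trans (_ : V + t * delta <= _); last by rewrite mulrC.
move: key; rewrite /w (eq_bigr (fun i => pi i * r i - pi i * V)); last by move=> i _; rewrite mulrBr.
by rewrite sumrB -mulr_suml hpi1 mul1r lerBlDl addrC.
Qed.
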